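(* Let $\mathcal L$ be a finite atomic lattice with atoms $A_1,\dots,A_n$ and $\mathcal G$ a building set in $\mathcal L$. Construct a fan $\Theta(\mathcal L,\mathcal G)$ in $\mathbb R^n$ as follows. (0) Let $\Theta_0$ be the fan consisting of the cone spanned by the standard basis vectors $e_1,\dots,e_n$ of $\mathbb R^n$ and all its faces. (1) Choose a linear order $\succ$ on $\mathcal G$ with $G\le G'$ in $\mathcal L$ implying $G'\succeq G$, and write $\mathcal G=\{G_1\succ G_2\succ\dots\succ G_t\}$. For $i=1,\dots,t$ successively, perform the stellar subdivision of the current fan at the cone $V(\lfloor G_i\rfloor)$ with new ray generated by $v_{G_i}$; call the resulting fan $\widetilde\Theta(\mathcal L,\mathcal G)$. (2) Remove from $\widetilde\Theta(\mathcal L,\mathcal G)$ all cones $V(\mathcal T)$ whose set $\mathcal T\subseteq\mathcal G$ of indices of generating vectors is not nested, and call the result $\Theta(\mathcal L,\mathcal G)$. Then $\Theta(\mathcal L,\mathcal G)$ coincides with the fan $\Sigma(\mathcal L,\mathcal G)=\{V(\mathcal S):\mathcal S\text{ nested in }\mathcal G\}$.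
   Context: A lattice is a finite poset in which every subset has a join $\vee$ and a meet; $\hat0$ is its least element; atomic means every element is a join of atoms. For $X\le Y$ write $[X,Y]=\{Z:X\le Z\le Y\}$ and $\mathcal G_{\le X}=\{G\in\mathcal G:G\le X\}$. A subset $\mathcal G\subseteq\mathcal L\setminus\{\hat0\}$ is a building set if for every $X\ne\hat0$, with $\{G_1,\dots,G_k\}$ the maximal elements of $\mathcal G_{\le X}$, there is a poset isomorphism $\prod_{i=1}^k[\hat0,G_i]\to[\hat0,X]$ sending $(\hat0,\dots,G_i,\dots,\hat0)$ to $G_i$ (in particular all atoms lie in $\mathcal G$). A subset $\mathcal S\subseteq\mathcal G$ is nested if for every set of pairwise incomparable $G_1,\dots,G_t\in\mathcal S$, $t\ge2$, $G_1\vee\dots\vee G_t\notin\mathcal G$. For $X\in\mathcal L$, $\lfloor X\rfloor$ is the set of atoms below $X$, and $v_X\in\mathbb R^n$ has $i$-th coordinate $1$ if $A_i\le X$ and $0$ otherwise (so $v_{A_i}=e_i$); $V(\mathcal S)$ is the cone spanned by $\{v_X:X\in\mathcal S\}$. The stellar subdivision of a fan $\Theta$ at a cone $\tau\in\Theta$ with new ray spanned by $v$ in the relative interior of $\tau$ replaces every cone $\sigma\in\Theta$ containing $\tau$ by the cones spanned by $\rho\cup\{v\}$ for all faces $\rho$ of $\sigma$ not containing $\tau$ (and these faces $\rho$ themselves); here $v_{G_i}$ is the sum of the generators $e_j$ of $V(\lfloor G_i\rfloor)$ (barycentric subdivision). *)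

(* Defs.v *)
From HB Require Import structures.
From mathcomp Require Import all_boot all_order all_algebra.
From mathcomp Require Import boolp classical_sets.
Set Implicit Arguments. Unset Strict Implicit. Unset Printing Implicit Defensive.
Import Order.TTheory GRing.Theory Num.Theory.

Section Lattice.
Context {d : Order.disp_t} (L : finTBLatticeType d).
Local Open Scope order_scope.

Definition is_atom (x : L) : Prop :=
  \bot < x /\ forall y : L, \bot < y -> y <= x -> y = x.

Definition atomic : Prop :=
  forall x : L, x = \join_(a : L | `[< is_atom a >] && (a <= x)) a.

Definition maxG (G : {set L}) (X : L) : {set L} :=
  [set g in G | (g <= X) && [forall h in G, ((h <= X) && (g <= h)) ==> (h == g)]].

(* elements of the product prod_{g in M} [\hat0, g], encoded as finite
   functions L -> L vanishing (= \bot) outside M *)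
Definition prod_dom (M : {set L}) : {set {ffun L -> L}} :=
  [set f : {ffun L -> L} | [forall g, if g \in M then f g <= g else f g == \bot]].

Definition prod_unit (g : L) : {ffun L -> L} :=
  [ffun h => if h == g then g else \bot].

Definition building_set (G : {set L}) : Prop :=
  \bot \notin G /\
  forall X : L, X != \bot ->
    let M := maxG G X in
    exists phi : {ffun L -> L} -> L,
      [/\ {in prod_dom M &, injective phi},
          phi @: prod_dom M = [set Y | Y <= X],
          {in prod_dom M &, forall f f', (phi f <= phi f') = [forall g, f g <= f' g]}
        & {in M, forall g, phi (prod_unit g) = g}].

Definition nested (G S : {set L}) : Prop :=
  S \subset G /\
  forall T : {set L}, T \subset S -> 1 < #|T|%N ->
    {in T &, forall x y, x != y -> ~~ (x >=< y)} ->
    \join_(g in T) g \notin G.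

End Lattice.

Section Geometry.
Context {R : realFieldType} {n : nat}.
Local Open Scope ring_scope.
Local Open Scope classical_set_scope.

Notation vec := 'rV[R]_n.

Definition cone (vs : seq vec) : set vec :=
  [set x | exists c : 'I_(size vs) -> R,
      (forall i, 0 <= c i) /\ x = \sum_(i < size vs) c i *: vs`_i].

Definition dotv (u x : vec) : R := (u *m x^T) 0 0.

Definition face (rho sigma : set vec) : Prop :=
  exists u : vec, (forall x, sigma x -> 0 <= dotv u x) /\
                  rho = sigma `&` [set x | dotv u x = 0].

Definition cone_add (rho : set vec) (v : vec) : set vec :=
  [set y | exists x c, rho x /\ 0 <= c /\ y = x + c *: v].

Definition stellar (Theta : set (set vec)) (tau : set vec) (v : vec)
  : set (set vec) :=
  [set sigma | (Theta sigma /\ ~ (tau `<=` sigma)) \/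
     exists sigma0 rho, [/\ Theta sigma0, tau `<=` sigma0, face rho sigma0,
                            ~ (tau `<=` rho) & (sigma = cone_add rho v \/ sigma = rho)]].

Definition ebasis (i : 'I_n) : vec := \row_(j < n) (if j == i then 1 else 0).

Definition Theta0 : set (set vec) :=
  [set sigma | face sigma (cone [seq ebasis i | i <- enum 'I_n])].

End Geometry.

Section Fans.
Context {R : realFieldType} {d : Order.disp_t} {L : finTBLatticeType d} {n : nat}.
Variable (A : 'I_n -> L).
Local Open Scope order_scope.
Local Open Scope classical_set_scope.

Definition vX (X : L) : 'rV[R]_n :=
  (\row_(i < n) (if (A i <= X)%O then 1 else 0))%R.

Definition Vcone (S : {set L}) : set 'rV[R]_n :=
  cone [seq vX X | X <- enum S].

Definition floor (X : L) : {set L} := finset (fun a : L => `[< is_atom a >] && (a <= X)).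

Definition Theta_tilde (s : seq L) : set (set 'rV[R]_n) :=
  foldl (fun Th g => stellar Th (Vcone (floor g)) (vX g)) Theta0 s.

(* set of indices G in G of the generating (extremal-ray) vectors of sigma *)
Definition gen_index (G : {set L}) (sigma : set 'rV[R]_n) (T : {set L}) : Prop :=
  forall g, g \in T <-> (g \in G /\ face (cone [:: vX g]) sigma).

Definition Theta_fan (G : {set L}) (s : seq L) : set (set 'rV[R]_n) :=
  [set sigma | Theta_tilde s sigma /\
     forall T : {set L}, gen_index G sigma T -> nested G T].

Definition Sigma_fan (G : {set L}) : set (set 'rV[R]_n) :=
  [set sigma | exists S : {set L}, nested G S /\ sigma = Vcone S].

End Fans.

(* Main.v *)
Require Import Defs.
From HB Require Import structures.
From mathcomp Require Import all_boot all_order all_algebra.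
From mathcomp Require Import boolp classical_sets.
Import Order.TTheory GRing.Theory Num.Theory.
Set Implicit Arguments. Unset Strict Implicit. Unset Printing Implicit Defensive.

Section Geo.
Variables (R : realFieldType) (n : nat).
Local Open Scope ring_scope.
Local Open Scope classical_set_scope.
Notation vec := 'rV[R]_n.

Definition Vcf (I : finType) (f : I -> vec) (T : {set I}) : set vec :=
  [set x | exists c : I -> R, [/\ forall i, 0 <= c i, forall i, i \notin T -> c i = 0
                                & x = \sum_i c i *: f i]].

Lemma dotvE (u x : vec) : dotv u x = \sum_j u 0 j * x 0 j.
Proof. by rewrite /dotv !mxE; apply: eq_bigr => j _; rewrite mxE. Qed.

Lemma dotvDr (u x y : vec) : dotv u (x + y) = dotv u x + dotv u y.
Proof. by rewrite !dotvE -big_split; apply: eq_bigr => j _; rewrite mxE mulrDr. Qed.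

Lemma dotv0r (u : vec) : dotv u 0 = 0.
Proof. by rewrite dotvE big1 // => j _; rewrite mxE mulr0. Qed.

Lemma dotvZr (u : vec) c (x : vec) : dotv u (c *: x) = c * dotv u x.
Proof.
rewrite !dotvE mulr_sumr; apply: eq_bigr => j _; rewrite mxE.
by rewrite mulrCA.
Qed.

Lemma dotvBl (u w x : vec) : dotv (u - w) x = dotv u x - dotv w x.
Proof.
rewrite !dotvE -sumrB; apply: eq_bigr => j _; rewrite !mxE.
by rewrite mulrBl.
Qed.

Lemma dotvZl c (u x : vec) : dotv (c *: u) x = c * dotv u x.
Proof.
rewrite !dotvE mulr_sumr; apply: eq_bigr => j _; rewrite mxE.
by rewrite mulrA.
Qed.

Lemma dotv_sumr (I : finType) (P : pred I) (u : vec) (F : I -> vec) :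
  dotv u (\sum_(i | P i) F i) = \sum_(i | P i) dotv u (F i).
Proof. by apply: (big_morph (dotv u)); [exact: dotvDr | exact: dotv0r]. Qed.

Lemma dotv_suml (I : finType) (P : pred I) (x : vec) (F : I -> vec) :
  dotv (\sum_(i | P i) F i) x = \sum_(i | P i) dotv (F i) x.
Proof.
apply: (big_morph (fun u => dotv u x)).
  by move=> a b; rewrite !dotvE -big_split; apply: eq_bigr => j _; rewrite mxE mulrDl.
by rewrite dotvE big1 // => j _; rewrite mxE mul0r.
Qed.

Lemma dotv_Vcf (I : finType) (f : I -> vec) (u : vec) (c : I -> R) :
  dotv u (\sum_i c i *: f i) = \sum_i c i * dotv u (f i).
Proof. by rewrite dotv_sumr; apply: eq_bigr => i _; rewrite dotvZr. Qed.

Lemma sum_delta (I : finType) (A : {set I}) (a : I) :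
  \sum_(b in A) ((a == b)%:R : R) = (a \in A)%:R.
Proof.
case: (boolP (a \in A)) => H.
  rewrite (bigD1 a) //= eqxx big1 ?addr0 // => b /andP[_ nb].
  by rewrite eq_sym (negbTE nb).
by rewrite big1 // => b bA; case: eqP => // e; subst; rewrite bA in H.
Qed.

Lemma sum_delta' (I : finType) (A : {set I}) (a : I) :
  \sum_(b in A) ((b == a)%:R : R) = (a \in A)%:R.
Proof. by rewrite -(sum_delta A a); apply: eq_bigr => b _; rewrite eq_sym. Qed.

Lemma sum_delta_all (I : finType) (a : I) (F : I -> vec) :
  \sum_i ((i == a)%:R : R) *: F i = F a.
Proof.
rewrite (bigD1 a) //= eqxx scale1r big1 ?addr0 // => i /negbTE ->.
by rewrite scale0r.
Qed.

Lemma Vcf_mem (I : finType) (f : I -> vec) (T : {set I}) i : i \in T -> Vcf f T (f i).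
Proof.
move=> iT; exists (fun j => ((j == i)%:R : R)); split.
- by move=> j; rewrite ler0n.
- by move=> j jT; case: eqP => // e; subst; rewrite iT in jT.
- by rewrite sum_delta_all.
Qed.

Lemma Vcf_sub (I : finType) (f : I -> vec) (T1 T2 : {set I}) :
  T1 \subset T2 -> Vcf f T1 `<=` Vcf f T2.
Proof.
move=> sT x [c [c0 cT ->]]; exists c; split => // i iT.
by apply: cT; apply/negP => /(fintype.subsetP sT) h; rewrite h in iT.
Qed.

Lemma Vcf_nil (I : finType) (f : I -> vec) (T : {set I}) :
  (forall i, i \notin T) -> Vcf f T = [set 0].
Proof.
move=> hT; apply/seteqP; split => x /=.
  by move=> [c [c0 cT ->]]; rewrite big1 // => i _; rewrite cT ?scale0r.
move=> ->; exists (fun=> 0); split => //; by rewrite big1 // => i _; rewrite scale0r.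
Qed.

Lemma cone_add_Vcf (I : finType) (f : I -> vec) (T : {set I}) g :
  cone_add (Vcf f T) (f g) = Vcf f (g |: T).
Proof.
apply/seteqP; split => y /=.
  move=> [x [c0 [[c [cp cT ->]] [c00 ->]]]].
  exists (fun i => c i + (i == g)%:R * c0); split.
  - by move=> i; rewrite addr_ge0 // mulr_ge0 // ler0n.
  - move=> i; rewrite !inE negb_or => /andP[ig iT].
    by rewrite cT // (negbTE ig) mul0r addr0.
  - rewrite -(sum_delta_all g (fun i => c0 *: f i)) -big_split /=.
    by apply: eq_bigr => i _; rewrite scalerDl scalerA.
move=> [c [cp cT ->]].
exists (\sum_i (if i == g then 0 else c i) *: f i), (c g); split.
  exists (fun i => if i == g then 0 else c i); split => //.
  - by move=> i; case: eqP.
  - move=> i iT; case: eqP => // /eqP ig; apply: cT.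
    by rewrite !inE negb_or ig.
split => //.
rewrite -(sum_delta_all g (fun i => c g *: f i)) -big_split /=.
apply: eq_bigr => i _; case: eqP => [->|_] /=.
  by rewrite scale0r add0r mulr1n scale1r.
by rewrite mulr0n scale0r addr0.
Qed.

Lemma cone_nil : cone ([::] : seq vec) = [set 0].
Proof.
apply/seteqP; split => x /=.
  by move=> [c [_ ->]]; rewrite big_ord0.
by move=> ->; exists (fun=> 0); split => //; rewrite big_ord0.
Qed.

Lemma cone_cons (v : vec) vs : cone (v :: vs) = cone_add (cone vs) v.
Proof.
apply/seteqP; split => y /=.
  move=> [c [cp ->]]; rewrite big_ord_recl /=.
  exists (\sum_(i < size vs) c (lift ord0 i) *: vs`_i), (c ord0); split.
    by exists (fun i => c (lift ord0 i)); split.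
  by split => //; rewrite addrC.
move=> [x [c0 [[c [cp ->]] [c00 ->]]]].
exists (fun i : 'I_(size vs).+1 => if unlift ord0 i is Some j then c j else c0).
split.
  by move=> i; case: (unlift ord0 i).
rewrite big_ord_recl /= unlift_none addrC; congr (_ + _).
by apply: eq_bigr => i _; rewrite liftK.
Qed.

Lemma cone_map (I : finType) (f : I -> vec) (r : seq I) :
  cone (map f r) = Vcf f [set x in r].
Proof.
elim: r => [|a r IH] /=.
  by rewrite cone_nil Vcf_nil // => i; rewrite inE.
rewrite cone_cons IH cone_add_Vcf; congr Vcf.
by apply/setP => x; rewrite !inE.
Qed.

Lemma face_eq (I : finType) (f : I -> vec) (T : {set I}) (u : vec) :
  (forall t, t \in T -> 0 <= dotv u (f t)) ->
  Vcf f T `&` [set x | dotv u x = 0] = Vcf f [set t in T | dotv u (f t) == 0].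
Proof.
move=> hu; apply/seteqP; split => x /=.
  move=> [[c [cp cT ->]] /=]; rewrite dotv_Vcf => H0.
  have h0 : forall i, c i * dotv u (f i) = 0.
    move=> i; apply: (psumr_eq0P _ H0) => // j _.
    case: (boolP (j \in T)) => jT; first by rewrite mulr_ge0 // hu.
    by rewrite cT // mul0r.
  exists c; split => // i; rewrite inE negb_and => /orP[iT|]; first exact: cT.
  move=> nz; have := h0 i; move/eqP; rewrite mulf_eq0 (negbTE nz) orbF.
  by move/eqP.
move=> [c [cp cT ->]]; split.
  exists c; split => // i iT; apply: cT; by rewrite inE (negbTE iT).
rewrite /= dotv_Vcf big1 // => i _.
case: (boolP (i \in [set t in T | dotv u (f t) == 0])) => H.
  by move: H; rewrite inE => /andP[_ /eqP ->]; rewrite mulr0.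
by rewrite cT // mul0r.
Qed.

Lemma face_Vcf (I : finType) (f : I -> vec) (T : {set I}) rho :
  face rho (Vcf f T) -> exists2 T0 : {set I}, T0 \subset T & rho = Vcf f T0.
Proof.
move=> [u [hu ->]].
exists [set t in T | dotv u (f t) == 0].
  by apply/fintype.subsetP => t; rewrite inE => /andP[].
by apply: face_eq => t tT; apply: hu; apply: Vcf_mem.
Qed.

Definition DB (I : finType) (f : I -> vec) (T : {set I}) :=
  forall t, t \in T -> exists u, forall t', t' \in T -> dotv u (f t') = (t == t')%:R.

Lemma DB_sub (I : finType) (f : I -> vec) (T T0 : {set I}) : DB f T -> T0 \subset T -> DB f T0.
Proof.
move=> h sT t tT0; have [u hu] := h t (fintype.subsetP sT t tT0).
by exists u => t' t'T; apply: hu; apply: (fintype.subsetP sT).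
Qed.

Lemma face_sub (I : finType) (f : I -> vec) (T T0 : {set I}) :
  DB f T -> T0 \subset T -> face (Vcf f T0) (Vcf f T).
Proof.
move=> hD sT.
have : forall t, exists u, t \in T -> forall t', t' \in T -> dotv u (f t') = (t == t')%:R.
  move=> t; case: (boolP (t \in T)) => tT; last by exists 0.
  by have [u hu] := hD t tT; exists u.
move=> /choice [uf huf].
pose u := \sum_(t in T :\: T0) uf t.
have hd : forall t', t' \in T -> dotv u (f t') = (t' \in T :\: T0)%:R.
  move=> t' t'T; rewrite /u dotv_suml -sum_delta'; apply: eq_bigr => t.
  by rewrite inE => /andP[_ tT]; apply: huf.
have hpos : forall t, t \in T -> 0 <= dotv u (f t) by move=> t tT; rewrite hd // ler0n.
exists u; split.
  move=> x [c [cp cT ->]]; rewrite dotv_Vcf sumr_ge0 // => i _.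
  case: (boolP (i \in T)) => iT; first by rewrite mulr_ge0 // hpos.
  by rewrite cT // mul0r.
rewrite face_eq //; congr Vcf; apply/setP => t; rewrite inE.
case: (boolP (t \in T)) => tT /=.
  rewrite hd // !inE tT andbT pnatr_eq0 eqb0 negbK.
  by [].
by apply/negbTE/negP => /(fintype.subsetP sT) h; rewrite h in tT.
Qed.

End Geo.

Section Lat.
Variables (R : realFieldType) (disp : Order.disp_t) (L : finTBLatticeType disp)
  (n : nat) (A : 'I_n -> L) (G : {set L}).
Hypotheses (hA : injective A) (hat : forall x : L, is_atom x <-> exists i, x = A i)
  (hatomic : atomic L) (hG : building_set G).
Local Notation vX := (@vX R disp L n A).
Local Open Scope classical_set_scope.
Local Open Scope ring_scope.

Lemma atomA i : is_atom (A i). Proof. by apply/hat; exists i. Qed.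

Lemma atom_le (a x : L) : is_atom x -> (\bot < a)%O -> (a <= x)%O -> a = x.
Proof. by case=> _ h; apply: h. Qed.

Lemma leAA i j : (A i <= A j)%O = (i == j).
Proof.
apply/idP/eqP => [h|->//]; apply: hA; apply: atom_le (atomA j) _ h.
by case: (atomA i).
Qed.

Lemma vXE (x : L) i : vX x 0 i = if (A i <= x)%O then 1 else 0.
Proof. by rewrite mxE. Qed.

Lemma le_atoms (x y : L) : (forall i, A i <= x -> A i <= y)%O -> (x <= y)%O.
Proof.
move=> h; rewrite (hatomic x); apply/joinsP => a /andP[/asboolP ha ax].
by case/hat: ha => i ea; subst a; exact: h.
Qed.

Lemma nonbot_atom (x : L) : x != \bot%O -> exists i, (A i <= x)%O.
Proof.
move=> nx; case: (pselect (exists i, (A i <= x)%O)) => // hn.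
exfalso; move/negP: nx; apply; apply/eqP/le_anti; rewrite le0x andbT.
by apply: le_atoms => i hi; exfalso; apply: hn; exists i.
Qed.

Lemma vX_inj (x y : L) : vX x = vX y -> x = y.
Proof.
move=> e.
have h : forall i, (A i <= x)%O = (A i <= y)%O.
  move=> i; have := congr1 (fun M : 'rV[R]_n => M 0 i) e; rewrite !vXE.
  by do 2 case: ifP => //; move=> _ _ /eqP; rewrite ?oner_eq0 // eq_sym oner_eq0.
by apply/le_anti; rewrite !le_atoms // => i; rewrite h.
Qed.

Lemma vX_A i : vX (A i) = ebasis i.
Proof. by apply/rowP => j; rewrite vXE mxE leAA. Qed.

Lemma floorE (a X : L) : (a \in floor X) = `[< is_atom a >] && (a <= X)%O.
Proof. by rewrite /floor inE. Qed.

Lemma vX_floor (g : L) : vX g = \sum_(b in floor g) vX b.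
Proof.
apply/rowP => k; rewrite summxE vXE.
rewrite (eq_bigr (fun b => ((b == A k)%:R : R))); last first.
  move=> b; rewrite floorE => /andP[/asboolP hb _]; rewrite vXE.
  case: ifP => h; first by rewrite (atom_le hb _ h) ?eqxx //; case: (atomA k).
  by case: eqP => // e; subst; rewrite lexx in h.
rewrite sum_delta' floorE; have := atomA k => /asboolP ->.
by case: ifP.
Qed.

Lemma Vcone_Vcf (S : {set L}) : Vcone A S = Vcf vX S.
Proof.
rewrite /Vcone cone_map; congr Vcf; by apply/setP => x; rewrite inE mem_enum.
Qed.

Lemma vX_ge0 (x : L) i : 0 <= vX x 0 i.
Proof. by rewrite vXE; case: ifP. Qed.

Lemma tau_sub (g : L) (T : {set L}) :
  Vcf vX (floor g) `<=` Vcf vX T -> floor g \subset T.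
Proof.
move=> h; apply/fintype.subsetP => a; rewrite floorE => /andP[/asboolP ha ag].
case/hat: (ha) => j ea; subst a.
have jf : A j \in floor g by rewrite floorE ag andbT; apply/asboolP.
have [c [cp cT e]] := h _ (Vcf_mem vX jf).
have ek : forall k, vX (A j) 0 k = \sum_t c t * vX t 0 k.
  by move=> k; rewrite e summxE; apply: eq_bigr => t _; rewrite mxE.
have [t tnz] : exists t, c t * vX t 0 j != 0.
  apply: contrapT => hn.
  move: (ek j); rewrite big1 => [|t _]; last first.
    by apply/eqP; apply: contrapT => H; apply: hn; exists t; apply/negP.
  by rewrite vXE lexx; apply/eqP; rewrite oner_eq0.
move: tnz; rewrite mulf_eq0 negb_or => /andP[ct0 vt0].
have tT : t \in T by apply/negPn/negP => /cT ct; rewrite ct eqxx in ct0.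
have jt : (A j <= t)%O by move: vt0; rewrite vXE; case: ifP => // _; rewrite eqxx.
have kt : forall k, k != j -> ~~ (A k <= t)%O.
  move=> k kj; have := ek k; rewrite vXE leAA (negbTE kj) => /esym h0.
  have nn : forall i, true -> 0 <= c i * vX i 0 k.
    by move=> i _; rewrite mulr_ge0 ?vX_ge0.
  have := @psumr_eq0P _ _ _ _ nn h0 t isT.
  rewrite vXE; case: ifP => // _; rewrite mulr1 => ct.
  by rewrite ct eqxx in ct0.
suff -> : A j = t by [].
apply/le_anti; rewrite jt /=; apply: le_atoms => i it.
case: (eqVneq i j) => [->|ij]; first exact: lexx.
by rewrite (negbTE (kt i ij)) in it.
Qed.


Definition img (D : set {set L}) : set (set 'rV[R]_n) :=
  [set sigma | exists2 T, D T & sigma = Vcf vX T].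

Definition stepD (D : set {set L}) (g : L) : set {set L} :=
  [set T | (D T /\ ~~ (floor g \subset T)) \/
     exists (sig rho : {set L}), [/\ D sig, floor g \subset sig, rho \subset sig,
                         ~~ (floor g \subset rho) & (T = g |: rho \/ T = rho)]].

Definition Inv (D : set {set L}) := forall T, D T -> T \subset G /\ DB vX T.

Lemma DB_add (sig rho : {set L}) g : DB vX sig -> floor g \subset sig ->
  rho \subset sig -> ~~ (floor g \subset rho) -> DB vX (g |: rho).
Proof.
move=> hD fs rs nf.
case: (boolP (g \in rho)) => gr.
  have -> : g |: rho = rho by apply/setP => x; rewrite !inE; case: eqP => // ->.
  by apply: DB_sub hD rs.
have [a af ar] := fintype.subsetPn nf.
have as_ : a \in sig := fintype.subsetP fs a af.
have [ua hua] := hD a as_.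
have uag : dotv ua (vX g) = 1.
  rewrite vX_floor dotv_sumr (eq_bigr (fun b => ((a == b)%:R : R))).
    by rewrite sum_delta af.
  by move=> b bf; apply: hua; apply: (fintype.subsetP fs).
move=> t /setU1P [->|tr].
  exists ua => t' /setU1P [->|t'r]; first by rewrite uag eqxx.
  rewrite hua ?(fintype.subsetP rs) //.
  have -> : (a == t') = false by apply/negbTE; apply: contraNneq ar => ->.
  by have -> : (g == t') = false by apply/negbTE; apply: contraNneq gr => ->.
have ts : t \in sig := fintype.subsetP rs t tr.
have [ut hut] := hD t ts.
exists (ut - dotv ut (vX g) *: ua) => t' /setU1P [->|t'r].
  rewrite dotvBl dotvZl uag mulr1 subrr.
  by have -> : (t == g) = false by apply/negbTE; apply: contraNneq gr => <-.
rewrite dotvBl dotvZl hut ?(fintype.subsetP rs) // hua ?(fintype.subsetP rs) //.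
have -> : (a == t') = false by apply/negbTE; apply: contraNneq ar => ->.
by rewrite mulr0 subr0.
Qed.

Lemma Inv_step D g : Inv D -> g \in G -> Inv (stepD D g).
Proof.
move=> hI gG T [[DT _]|[sig [rho [Ds fs rs nf eT]]]]; first exact: hI.
have [sG hD] := hI _ Ds.
have rG : rho \subset G := fintype.subset_trans rs sG.
case: eT => ->; split.
- by rewrite finset.subUset finset.sub1set gG rG.
- exact: DB_add hD fs rs nf.
- exact rG.
- exact: DB_sub hD rs.
Qed.

Lemma step_img D g : Inv D ->
  stellar (img D) (Vcone A (floor g)) (vX g) = img (stepD D g).
Proof.
move=> hI; rewrite Vcone_Vcf; apply/seteqP; split => sig /=.
  case=> [[[T DT ->] nsub]|[sig0 [rho [[T DT ->] tsub hf ntr hs]]]].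
    exists T => //; left; split => //; apply/negP => fs; apply: nsub; exact: Vcf_sub.
  have [T0 T0T erho] := face_Vcf hf; subst rho.
  have fT := tau_sub tsub.
  have nf : ~~ (floor g \subset T0) by apply/negP => fs; apply: ntr; exact: Vcf_sub.
  case: hs => ->.
    exists (g |: T0); last by rewrite cone_add_Vcf.
    right; exists T, T0; split => //; by left.
  exists T0 => //; right; exists T, T0; split => //; by right.
move=> [T [[DT nf] | [sig0 [rho [Ds fs rs nf eT]]]] ->].
  left; split; first by exists T.
  by move/tau_sub => fs; rewrite fs in nf.
right; exists (Vcf vX sig0), (Vcf vX rho); split.
- by exists sig0.
- exact: Vcf_sub.
- by apply: face_sub rs; case: (hI _ Ds).
- by move/tau_sub => fr; rewrite fr in nf.
- by case: eT => ->; [left; rewrite cone_add_Vcf | right].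
Qed.

Definition Atoms0 : {set L} := [set x in map A (enum 'I_n)].
Definition D0 : set {set L} := [set T | T \subset Atoms0].

Lemma atoms_in_G i : A i \in G.
Proof.
case: hG => botG hb.
have Anb : A i != \bot%O by rewrite -lt0x; case: (atomA i).
have [phi [_ himg _ _]] := hb (A i) Anb.
apply: contraT => nAG.
have M0 : maxG G (A i) = finset.set0.
  apply/setP => g; rewrite !inE; apply/negbTE/negP => /andP[gG /andP[gA _]].
  have e : g = A i.
    apply: atom_le (atomA i) _ gA; rewrite lt0x.
    by apply: contraNneq botG => <-.
  by subst; rewrite gG in nAG.
move: himg; rewrite M0 => himg.
have hf : forall f : {ffun L -> L}, f \in prod_dom (@finset.set0 L) -> f = [ffun => \bot%O].
  move=> f; rewrite inE => /forallP hf; apply/ffunP => g; rewrite ffunE.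
  by move: (hf g); rewrite inE => /eqP.
have : \bot%O \in phi @: prod_dom finset.set0 by rewrite himg inE le0x.
case/imsetP => f1 f1d e1.
have : A i \in phi @: prod_dom finset.set0 by rewrite himg inE lexx.
case/imsetP => f2 f2d e2.
by move: Anb; rewrite e2 e1 (hf _ f1d) (hf _ f2d) eqxx.
Qed.

Lemma DB_atoms : DB vX Atoms0.
Proof.
move=> t; rewrite inE => /mapP [i _ ->].
exists (ebasis i) => t'; rewrite inE => /mapP [k _ ->].
rewrite dotvE (bigD1 i) //= big1 => [|j ji]; last by rewrite mxE (negbTE ji) mul0r.
by rewrite mxE eqxx mul1r addr0 vXE leAA (inj_eq hA); case: eqP.
Qed.

Lemma Theta0_img : Theta0 = img D0.
Proof.
have ec : cone [seq ebasis i | i <- enum 'I_n] = Vcf vX Atoms0.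
  transitivity (cone [seq vX (A i) | i <- enum 'I_n]).
    by congr cone; apply: eq_map => i; rewrite vX_A.
  by rewrite /Atoms0 -cone_map; congr cone; rewrite -[in RHS]map_comp.
apply/seteqP; split => sig /=.
  rewrite /Theta0 /= ec => /face_Vcf [T0 sT ->]; by exists T0.
move=> [T sT ->]; rewrite /Theta0 /= ec; exact: face_sub DB_atoms sT.
Qed.

Lemma Inv_D0 : Inv D0.
Proof.
move=> T sT; split; last exact: DB_sub DB_atoms sT.
apply: fintype.subset_trans sT _; apply/fintype.subsetP => x; rewrite inE => /mapP [i _ ->].
exact: atoms_in_G.
Qed.

Lemma fold_img (D : set {set L}) (s' : seq L) : Inv D -> {subset s' <= G} ->
  foldl (fun Th g => stellar Th (Vcone A (floor g)) (vX g)) (img D) s'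
    = img (foldl stepD D s') /\ Inv (foldl stepD D s').
Proof.
elim: s' D => [|g s' IH] D hI hs /=; first by split.
rewrite step_img //; apply: IH.
  by apply: Inv_step => //; apply: hs; rewrite inE eqxx.
by move=> x xs; apply: hs; rewrite inE xs orbT.
Qed.


Lemma nonbotG x : x \in G -> x != \bot%O.
Proof. by case: hG => botG _ xG; apply: contraNneq botG => <-. Qed.

Lemma face_ray (T : {set L}) g : T \subset G -> DB vX T -> g \in G ->
  face (cone [:: vX g]) (Vcf vX T) <-> g \in T.
Proof.
move=> TG hD gG.
have ec : cone [:: vX g] = Vcf vX [set x in [:: g]] by rewrite -cone_map.
rewrite ec; split; last first.
  move=> gT; apply: face_sub hD _; apply/fintype.subsetP => x.
  by rewrite inE mem_seq1 => /eqP ->.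
move=> /face_Vcf [T0 sT e].
have gin : Vcf vX [set x in [:: g]] (vX g) by apply: Vcf_mem; rewrite inE mem_seq1.
rewrite e in gin.
have [t tT0] : exists t, t \in T0.
  apply: contrapT => hn; move: gin; rewrite Vcf_nil; last first.
    by move=> i; apply/negP => h; apply: hn; exists i.
  move=> /= eg; have [i ai] := nonbot_atom (nonbotG gG).
  move: (congr1 (fun M : 'rV[R]_n => M 0 i) eg).
  by rewrite vXE ai mxE => /eqP; rewrite oner_eq0.
have tT : t \in T := fintype.subsetP sT t tT0.
have tin : Vcf vX T0 (vX t) := Vcf_mem vX tT0.
rewrite -e in tin.
case: tin => c [cp cT et].
have et' : vX t = c g *: vX g.
  rewrite et (bigD1 g) ?inE ?mem_seq1 //= big1 ?addr0 // => i ig.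
  by rewrite cT ?scale0r // inE mem_seq1.
have [i ai] := nonbot_atom (nonbotG (fintype.subsetP TG t tT)).
have := congr1 (fun M : 'rV[R]_n => M 0 i) et'.
rewrite /= vXE [in RHS]mxE vXE ai.
case: ifP => gi; last by rewrite mulr0 => /eqP; rewrite oner_eq0.
rewrite mulr1 => c1.
have : vX t = vX g by rewrite et' -c1 scale1r.
by move/vX_inj => <-.
Qed.

Lemma gen_index_eq (T T' : {set L}) : T \subset G -> DB vX T ->
  gen_index A G (Vcf vX T) T' <-> T' = T.
Proof.
move=> TG hD; split => [h|->].
  apply/setP => g; apply/idP/idP => [/h [gG /(face_ray TG hD gG)] //|gT].
  have gG := fintype.subsetP TG g gT.
  by apply/h; split => //; apply/(face_ray TG hD gG).
move=> g; split => [gT|[gG /(face_ray TG hD gG)] //].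
have gG := fintype.subsetP TG g gT.
by split => //; apply/(face_ray TG hD gG).
Qed.

Lemma exists_maxG (h X : L) : h \in G -> (h <= X)%O ->
  exists2 m, m \in maxG G X & (h <= m)%O.
Proof.
move=> hGm hX.
pose H := [set m in G | (h <= m)%O && (m <= X)%O].
have hH : h \in H by rewrite /H inE hGm lexx hX.
pose dn (m : L) := #|[set y : L | (y <= m)%O]%SET|.
case: (arg_maxnP dn hH) => m mH mmax.
have mH' : m \in H := mH; move: mH'; rewrite /H inE => /and3P [mG hm mX].
exists m => //.
rewrite /maxG inE mG mX /=; apply/forall_inP => h' h'G.
apply/implyP => /andP [h'X mh'].
have h'H : h' \in H by rewrite /H inE h'G h'X (le_trans hm mh').
have le_card := mmax h' h'H.
have sub : [set y : L | (y <= m)%O]%SET \subset [set y : L | (y <= h')%O]%SET.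
  by apply/fintype.subsetP => y; rewrite !inE => /le_trans; apply.
have eqs : [set y : L | (y <= m)%O]%SET = [set y : L | (y <= h')%O]%SET.
  apply/eqP; by rewrite finset.eqEcard sub; exact: le_card.
have : h' \in [set y : L | (y <= m)%O]%SET by rewrite eqs inE lexx.
by rewrite inE => h'm; apply/eqP/le_anti; rewrite h'm mh'.
Qed.


Lemma K_anti (S W : {set L}) g : nested G S -> W \subset S ->
  {in W &, forall x y, x != y -> ~~ (x >=< y)%O} ->
  g \in G -> (g <= \join_(x in W) x)%O -> exists2 x, x \in W & (g <= x)%O.
Proof.
move=> [SG hS] WS anti gG gX.
set X := (\join_(x in W) x)%O in gX.
have WG : W \subset G := fintype.subset_trans WS SG.
have Xnb : X != \bot%O.
  by apply: contraTneq gX => ->; rewrite lex0; exact: nonbotG gG.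
case: hG => _ hb.
have [phi [_ himg hord hunit]] := hb X Xnb.
set M := maxG G X in himg hord hunit.
have inM : forall m, m \in M -> m \in G /\ (m <= X)%O.
  by move=> m; rewrite /M /maxG inE => /andP[mG /andP[mX _]].
have unit_dom : forall m, m \in M -> prod_unit m \in prod_dom M.
  move=> m mM; rewrite inE; apply/forallP => h; rewrite /prod_unit ffunE.
  case: eqP => [->|_]; first by rewrite mM lexx.
  by case: ifP => _; [exact: le0x | exact: eqxx].
have preimg : forall Y, (Y <= X)%O -> exists2 f, f \in prod_dom M & Y = phi f.
  move=> Y YX; have : Y \in phi @: prod_dom M by rewrite himg inE.
  by case/imsetP => f fd ->; exists f.
have wX : forall w, w \in W -> (w <= X)%O by move=> w wW; exact: joins_sup.
have key : forall m, m \in M -> m \in W.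
  move=> m mM; have [mG mX] := inM m mM.
  set Wm := [set w in W | (w <= m)%O].
  set Y := (\join_(w in Wm) w)%O.
  have WmW : Wm \subset W by apply/fintype.subsetP => w; rewrite inE => /andP[].
  have YX : (Y <= X)%O := le_joins _ WmW.
  have [fY fYd eY] := preimg Y YX.
  pose k : {ffun L -> L} :=
    [ffun h => if h == m then fY m else if h \in M then h else \bot%O].
  have kd : k \in prod_dom M.
    rewrite inE; apply/forallP => h; rewrite ffunE.
    case: (eqVneq h m) => [->|hm].
      by rewrite mM; move: fYd; rewrite inE => /forallP /(_ m); rewrite mM.
    by case: (boolP (h \in M)) => hM /=.
  have Xk : (X <= phi k)%O.
    apply/joinsP => w wW.
    have [fw fwd ew] := preimg w (wX w wW).
    rewrite ew (hord _ _ fwd kd); apply/forallP => h; rewrite ffunE.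
    case: (eqVneq h m) => [->|hm].
      case: (boolP (w <= m)%O) => wm.
        have : (w <= Y)%O by apply: joins_sup; rewrite inE wW wm.
        by rewrite ew eY (hord _ _ fwd fYd) => /forallP; apply.
      have [m' m'M wm'] := exists_maxG (fintype.subsetP WG w wW) (wX w wW).
      have m'm : m' != m by apply: contraNneq wm => <-.
      have : (phi fw <= phi (prod_unit m'))%O by rewrite (hunit m' m'M) -ew.
      rewrite (hord _ _ fwd (unit_dom m' m'M)) => /forallP /(_ m).
      rewrite ffunE eq_sym (negbTE m'm) lex0 => /eqP ->; exact: le0x.
    idtac.
    move: fwd; rewrite inE => /forallP /(_ h).
    by case: (h \in M) => // /eqP ->.
  have [fX fXd eX] := preimg X (lexx X).
  have fXk : (fX m <= k m)%O.
    by move: Xk; rewrite eX (hord _ _ fXd kd) => /forallP /(_ m).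
  have mfX : (m <= fX m)%O.
    have : (phi (prod_unit m) <= phi fX)%O by rewrite (hunit m mM) -eX.
    rewrite (hord _ _ (unit_dom m mM) fXd) => /forallP /(_ m).
    by rewrite ffunE eqxx.
  have mfY : (m <= fY m)%O.
    by move: fXk; rewrite ffunE eqxx; apply: le_trans.
  have mY : (m <= Y)%O.
    suff : (phi (prod_unit m) <= Y)%O by rewrite (hunit m mM).
    rewrite eY (hord _ _ (unit_dom m mM) fYd); apply/forallP => h; rewrite ffunE.
    by case: eqP => [->//|_]; exact: le0x.
  have Ym : (Y <= m)%O by apply/joinsP => w; rewrite inE => /andP[].
  have eYm : Y = m by apply/le_anti; rewrite Ym mY.
  case: (ltngtP #|Wm| 1) => hc.
  - have W0 : Wm = finset.set0.
      by apply/eqP; rewrite -cards_eq0; move: hc; case: #|Wm|.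
    move: eYm; rewrite /Y W0 big_set0 => mb.
    by move: (nonbotG mG); rewrite -mb eqxx.
  - exfalso.
    have anti' : {in Wm &, forall x y, x != y -> ~~ (x >=< y)%O}.
      move=> x y; rewrite !inE => /andP[xW _] /andP[yW _]; exact: anti.
    have := hS Wm (fintype.subset_trans WmW WS) hc anti'.
    by rewrite -/Y eYm mG.
  - have /cards1P [w ew] : #|Wm| == 1%N by rewrite hc.
    move: eYm; rewrite /Y ew big_set1 => <-.
    by apply: (fintype.subsetP WmW); rewrite ew inE.
have [m mM gm] := exists_maxG gG gX.
by exists m => //; apply: key.
Qed.

Lemma K (S W : {set L}) g : nested G S -> W \subset S -> g \in G ->
  (g <= \join_(x in W) x)%O -> exists2 x, x \in W & (g <= x)%O.
Proof.
move=> hN; elim: {W}_.+1 {-2}W (ltnSn #|W|) => // k IH W Wk WS gG gW.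
case: (pselect (exists x y, [/\ x \in W, y \in W, x != y & (x <= y)%O])).
  move=> [x [y [xW yW xy le_xy]]].
  have yW' : y \in W :\ x by rewrite !inE eq_sym xy.
  have gW' : (g <= \join_(z in W :\ x) z)%O.
    apply: (le_trans gW); apply/joinsP => z zW.
    case: (eqVneq z x) => [->|zx].
      by apply: (le_trans le_xy); exact: joins_sup.
    by apply: joins_sup; rewrite !inE zx.
  have card' : (#|W :\ x| < k)%N.
    by move: Wk; rewrite (cardsD1 x W) xW add1n ltnS.
  have sW' : W :\ x \subset S.
    by apply: fintype.subset_trans WS; apply/fintype.subsetP => z; rewrite !inE => /andP[].
  have [z zW' gz] := IH _ card' sW' gG gW'.
  by exists z => //; move: zW'; rewrite !inE => /andP[].
move=> hn; apply: K_anti hN WS _ gG gW.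
move=> x y xW yW xy; apply/negP => /orP [h|h]; apply: hn.
  by exists x, y.
by exists y, x; split => //; rewrite eq_sym.
Qed.


Lemma le_join_floor (W : {set L}) g :
  (forall a, a \in floor g -> exists2 x, x \in W & (a <= x)%O) ->
  (g <= \join_(x in W) x)%O.
Proof.
move=> h; rewrite (hatomic g); apply/joinsP => a /andP[ha ag].
have af : a \in floor g by rewrite floorE ha ag.
have [x xW ax] := h a af.
by apply: (le_trans ax); exact: joins_sup.
Qed.

Section Comb.
Variable s : seq L.
Hypotheses (hu : uniq s) (hsG : forall g, (g \in s) = (g \in G))
  (hso : forall i j, (i < size s)%N -> (j < size s)%N ->
     (nth \bot%O s i <= nth \bot%O s j)%O -> (j <= i)%N).

Definition Sk (S : {set L}) k : {set L} :=
  (S :&: [set x in take k s]) :|: \bigcup_(u in S | u \notin take k s) floor u.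

Lemma comb (S : {set L}) : nested G S -> foldl stepD D0 s S.
Proof.
move=> hN; have [SG _] := hN.
suff H : forall k, (k <= size s)%N -> foldl stepD D0 (take k s) (Sk S k).
  have := H _ (leqnn _); rewrite take_size.
  suff -> : Sk S (size s) = S by [].
  rewrite /Sk take_size big_pred0 => [|u]; last first.
    by case: (boolP (u \in S)) => //= uS; rewrite hsG (fintype.subsetP SG u uS).
  apply/setP => x; rewrite !inE orbF.
  by case: (boolP (x \in S)) => //= xS; rewrite hsG (fintype.subsetP SG x xS).
elim => [_|k IH ks].
  rewrite take0 /=; change (Sk S 0 \subset Atoms0); apply/fintype.subsetP => x; rewrite /Sk take0 !inE /=.
  rewrite andbF /=; case/finset.bigcupP => u _; rewrite floorE => /andP[/asboolP ha _].
  by case/hat: ha => i ->; apply/mapP; exists i => //; rewrite mem_enum.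
have ks' : (k < size s)%N := ks.
have eSk1 : Sk S k.+1 = (S :&: [set x in rcons (take k s) (nth \bot%O s k)]) :|:
    \bigcup_(u in S | u \notin rcons (take k s) (nth \bot%O s k)) floor u.
  by rewrite /Sk (take_nth \bot%O ks').
rewrite (take_nth \bot%O ks') foldl_rcons eSk1.
have IHk := IH (ltnW ks').
move: IHk; rewrite /Sk.
set p := take k s; set g := nth \bot%O s k => IHk.
have gs : g \in s by apply: mem_nth.
have gnp : g \notin p by rewrite /p in_take // index_uniq // ltnn.
have gG : g \in G by rewrite -hsG.
have F3 : forall x, x \in G -> (g <= x)%O -> x \in p \/ x = g.
  move=> x xG gx; have xs : x \in s by rewrite hsG.
  have := hso ks' (_ : (index x s < size s)%N) ; rewrite ?index_mem // nth_index // => /(_ xs gx) jk.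
  case: (ltngtP (index x s) k) => c.
  - by left; rewrite /p in_take.
  - by rewrite ltnNge jk in c.
  - by right; rewrite /g -c nth_index.
set Rset := (S :&: [set x in p]) :|: \bigcup_(u in S | (u \notin p) && (u != g)) floor u.
have F4 : ~~ (floor g \subset Rset).
  apply/negP => sub.
  pose W := [set x in S | ((x \in p) && `[< is_atom x >]) || ((x \notin p) && (x != g))].
  have WS : W \subset S by apply/fintype.subsetP => x; rewrite inE => /andP[].
  have gW : (g <= \join_(x in W) x)%O.
    apply: le_join_floor => a af.
    move: (fintype.subsetP sub a af); rewrite !inE => /orP [/andP [aS ap]|].
      exists a; last exact: lexx.
      move: af; rewrite floorE => /andP[ha _].
      by rewrite inE aS ap ha.
    case/finset.bigcupP => u /andP[uS /andP[up ug]] au.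
    exists u; first by rewrite inE uS up ug orbT.
    by move: au; rewrite floorE => /andP[].
  have [x xW gx] := K hN WS gG gW.
  move: xW; rewrite inE => /andP [xS /orP [/andP [xp /asboolP xat] | /andP [xnp xg]]].
    have egx : g = x.
      apply: atom_le xat _ gx; rewrite lt0x; exact: nonbotG gG.
    by rewrite egx xp in gnp.
  case: (F3 x (fintype.subsetP SG x xS) gx) => [xp|exg].
    by rewrite xp in xnp.
  by rewrite exg eqxx in xg.
have eB : \bigcup_(u in S | u \notin rcons p g) floor u =
          \bigcup_(u in S | (u \notin p) && (u != g)) floor u.
  apply: eq_bigl => u; rewrite mem_rcons in_cons.
  by case: (u \in S); case: (u == g); case: (u \in p).
case: (boolP (g \in S)) => gS.
  right; exists ((S :&: [set x in p]) :|: \bigcup_(u in S | u \notin p) floor u), Rset.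
  split => //.
  - apply/fintype.subsetP => x xf; rewrite inE; apply/orP; right.
    by apply/finset.bigcupP; exists g => //; rewrite gS gnp.
  - apply/fintype.subsetP => x; rewrite !inE => /orP [->//|].
    case/finset.bigcupP => u /andP[uS /andP[up _]] xu.
    by apply/orP; right; apply/finset.bigcupP; exists u => //; rewrite uS up.
  - left; rewrite eB /Rset; apply/setP => x; rewrite !inE mem_rcons in_cons.
    case: (eqVneq x g) => [->|_] /=; last by [].
    by rewrite gS.
left; split.
  suff <- : (S :&: [set x in p]) :|: \bigcup_(u in S | u \notin p) floor u =
    (S :&: [set x in rcons p g]) :|: \bigcup_(u in S | u \notin rcons p g) floor u by [].
  rewrite eB; congr (_ :|: _).
    apply/setP => x; rewrite !inE mem_rcons in_cons.
    by case: (eqVneq x g) => [->|_] //=; rewrite (negbTE gS).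
  apply: eq_bigl => u; case: (eqVneq u g) => [->|_]; last by rewrite andbT.
  by rewrite (negbTE gS).
suff -> : (S :&: [set x in rcons p g]) :|: \bigcup_(u in S | u \notin rcons p g) floor u = Rset by [].
rewrite eB /Rset; congr (_ :|: _).
apply/setP => x; rewrite !inE mem_rcons in_cons.
by case: (eqVneq x g) => [->|_] //=; rewrite (negbTE gS).
Qed.

Lemma main_eq : Theta_fan (R:=R) A G s = Sigma_fan A G.
Proof.
have sG : {subset s <= G} by move=> g; rewrite hsG.
have [eT hI] := fold_img Inv_D0 sG.
apply/seteqP; split => sig /=.
  move=> [Tt hn]; move: Tt; rewrite /Theta_tilde Theta0_img eT.
  case=> T DT esig.
  have [TG hD] := hI _ DT.
  exists T; split; last by rewrite Vcone_Vcf.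
  by apply: hn; rewrite esig; exact: (proj2 (gen_index_eq T TG hD) erefl).
move=> [S [hN ->]].
have DS := comb hN; have [SG hD] := hI _ DS.
rewrite Vcone_Vcf; split.
  by rewrite /Theta_tilde Theta0_img eT; exists S.
by move=> T' /(gen_index_eq T' SG hD) ->.
Qed.

End Comb.

End Lat.

Theorem theorem6p1 (R : realFieldType) (disp : Order.disp_t)
  (L : finTBLatticeType disp) (n : nat) (A : 'I_n -> L) (G : {set L}) (s : seq L) :
  injective A ->
  (forall x : L, is_atom x <-> exists i, x = A i) ->
  atomic L ->
  building_set G ->
  (* s = [:: G_1; ...; G_t] lists G without repetition, along a linear order
     with G <= G' in L implying G' is listed no later than G *)
  uniq s -> (forall g, g \in s = (g \in G)) ->
  (forall i j, (i < size s)%N -> (j < size s)%N ->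
     (nth \bot s i <= nth \bot s j)%O -> (j <= i)%N) ->
  Theta_fan (R:=R) A G s = Sigma_fan A G.
Proof.
move=> hA hat hatomic hG hu hsG hso.
exact: (main_eq R hA hat hatomic hG hu hsG hso).
Qed.
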